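(* Let $t_1,x_1,t_2,x_2,b$ satisfy $0<t_1<t_2$, $\frac{x_1}{t_1}>\frac{x_2}{t_2}$, $0\le b\le\frac{(x_2-x_1)^2}{t_2-t_1}+\frac{x_1^2}{t_1}-\frac{x_2^2}{t_2}$. Let $(F,\rho)$ be a feasible pair minimizing $I_2$, with $F$ concave, $F'(t)\le\frac{F(t)}{t}$ on $[t_1,t_2]$, and $\rho$ nonincreasing, and let $g=g(F,\rho,b)$. If $g=0$ on an interval $[s_1,s_2]\subset[t_1,t_2]$, then $F'$ and $\rho$ are absolutely continuous on $[s_1,s_2]$.
   Context: A pair $(F,\rho)$ is feasible if $F:[t_1,t_2]\to\mathbb R$ is absolutely continuous with $F(t_1)=x_1$, $F(t_2)=x_2$, $\rho:[t_1,t_2]\to[0,\infty)$ is Lebesgue measurable, and $g(F,\rho,b)(t):=b-\frac{F(t_1)^2}{t_1}+\int_{t_1}^t(\rho(\tau)-F'(\tau)^2)d\tau+\frac{F(t)^2}{t}\ge0$ for all $t\in[t_1,t_2]$. $I_2(F,\rho)=\frac43\int_{t_1}^{t_2}\rho^{3/2}dt$. *)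

(* Defs.v *)
From HB Require Import structures.
From mathcomp Require Import all_boot all_order all_algebra.
From mathcomp Require Import all_classical all_reals all_analysis.
Set Implicit Arguments. Unset Strict Implicit. Unset Printing Implicit Defensive.
Import Order.TTheory GRing.Theory Num.Theory.
Import numFieldNormedType.Exports.
Local Open Scope classical_set_scope.
Local Open Scope ring_scope.

Section Defs.
Variable R : realType.

Definition abs_continuous (a b : R) (f : R -> R) : Prop :=
  forall e : R, 0 < e -> exists2 d : R, 0 < d &
    forall (n : nat) (u v : 'I_n -> R),
      (forall i, a <= u i /\ u i <= v i /\ v i <= b) ->
      (forall i j, i != j -> v i <= u j \/ v j <= u i) ->
      \sum_(i < n) (v i - u i) < d ->
      \sum_(i < n) `|f (v i) - f (u i)| < e.

Definition concave_on (a b : R) (f : R -> R) : Prop :=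
  forall x y l : R, a <= x <= b -> a <= y <= b -> 0 <= l <= 1 ->
    l * f x + (1 - l) * f y <= f (l * x + (1 - l) * y).

(* F' : the (a.e. defined) derivative, taken as mathcomp's derive1 *)
Definition gfun (t1 : R) (F rho : R -> R) (b : R) (t : R) : R :=
  b - F t1 ^+ 2 / t1
    + Rintegral (@lebesgue_measure R) `[t1, t]%classic
        (fun s => rho s - (derive1 F s) ^+ 2)
    + F t ^+ 2 / t.

(* feasible pairs; the integral in g is required to make sense, which we
   encode by Lebesgue integrability of rho and F'^2 on [t1, t2] *)
Definition feasible (t1 x1 t2 x2 b : R) (F rho : R -> R) : Prop :=
  abs_continuous t1 t2 F /\ F t1 = x1 /\ F t2 = x2 /\
      measurable_fun `[t1, t2]%classic rho /\
      (forall t, t1 <= t <= t2 -> 0 <= rho t) /\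
      (@lebesgue_measure R).-integrable `[t1, t2]%classic (fun s => (rho s)%:E) /\
      (@lebesgue_measure R).-integrable `[t1, t2]%classic
        (fun s => ((derive1 F s) ^+ 2)%:E) /\
      (forall t, t1 <= t <= t2 -> 0 <= gfun t1 F rho b t).

Definition I2 (t1 t2 : R) (rho : R -> R) : \bar R :=
  (4 / 3)%:E * \int[(@lebesgue_measure R)]_(s in `[t1, t2]%classic)
                 ((rho s) `^ (3 / 2))%:E.

End Defs.

(* Main.v *)
Require Import Defs.
From HB Require Import structures.
From mathcomp Require Import all_boot all_order all_algebra.
From mathcomp Require Import all_classical all_reals all_analysis.
From mathcomp Require Import ring lra.
Import Order.TTheory GRing.Theory Num.Theory.
Import numFieldNormedType.Exports.
Local Open Scope classical_set_scope.
Local Open Scope ring_scope.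

Section S_A1.
Context {R : realType}.
Notation mu := (@lebesgue_measure R).


Lemma ac_dom (a b C1 C2 : R) (p k : R -> R) :
  0 <= C1 -> 0 <= C2 -> abs_continuous a b p ->
  (forall u v, a <= u -> u <= v -> v <= b ->
     `|k v - k u| <= C1 * `|p v - p u| + C2 * (v - u)) ->
  abs_continuous a b k.
Proof.
move=> C10 C20 acp hk e e0.
have e2 : 0 < e / 2 / (C1 + 1) by rewrite divr_gt0 // ?divr_gt0 // ltr_wpDl.
have [d d0 hd] := acp _ e2.
exists (Num.min d (e / 2 / (C2 + 1))).
  by rewrite lt_min d0 /= divr_gt0 // ?divr_gt0 // ltr_wpDl.
move=> n u v huv hdis; rewrite lt_min => /andP[sd sd2].
have S1 := hd n u v huv hdis sd.
have Hle : \sum_(i < n) `|k (v i) - k (u i)| <=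
   C1 * \sum_(i < n) `|p (v i) - p (u i)| + C2 * \sum_(i < n) (v i - u i).
  rewrite !mulr_sumr -big_split /=; apply: ler_sum => i _.
  by have [? [? ?]] := huv i; apply: hk.
apply: (le_lt_trans Hle).
set A := \sum_(i < n) _ in S1 Hle *; set B := \sum_(i < n) _ in sd sd2 Hle *.
have A0 : 0 <= A by apply: sumr_ge0 => i _.
have B0 : 0 <= B by apply: sumr_ge0 => i _; have [? [? ?]] := huv i; rewrite subr_ge0.
have h1 : C1 * A <= e / 2.
  have : C1 * A <= (C1 + 1) * A by rewrite ler_wpM2r // lerDl.
  move/le_trans; apply.
  rewrite -ler_pdivlMl ?ltr_wpDl // mulrC; exact: ltW.
have h2 : C2 * B < e / 2.
  have : C2 * B <= (C2 + 1) * B by rewrite ler_wpM2r // lerDl.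
  move/le_lt_trans; apply.
  rewrite -ltr_pdivlMl ?ltr_wpDl // mulrC //.
have -> : e = e / 2 + e / 2 by rewrite -splitr.
exact: ler_ltD.
Qed.

End S_A1.

Section S_A2.
Context {R : realType}.
Notation mu := (@lebesgue_measure R).


Lemma dnbhs_right (f : R -> R) (l : R) : f @ (0:R)^' --> l -> f @ (0:R)^'+ --> l.
Proof.
move=> cvfx A /cvfx /nbhs_ballP [_ /posnumP[e] xe_A].
by exists e%:num => //= y xe_y /gt_eqF/negbT/xe_A; exact.
Qed.

Lemma dnbhs_left (f : R -> R) (l : R) : f @ (0:R)^' --> l -> f @ (0:R)^'- --> l.
Proof.
move=> cvfx A /cvfx /nbhs_ballP [_ /posnumP[e] xe_A].
by exists e%:num => //= y xe_y /lt_eqF/negbT/xe_A; exact.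
Qed.

Lemma der_cvg (F : R -> R) x : derivable F x 1 ->
  (fun h => h^-1 * (F (h + x) - F x)) @ 0^' --> derive1 F x.
Proof.
move=> dF; rewrite /derive1.
rewrite /derivable in dF.
have e : (fun h : R => h^-1 *: ((F \o shift x) (h *: 1) - F x)) = (fun h => h^-1 * (F (h + x) - F x)).
  by apply/funext=> h; rewrite /= /shift scaler1.
rewrite e in dF.
exact: dF.
Qed.

Lemma concave_der_mono (t1 t2 : R) (F : R -> R) x y :
  concave_on t1 t2 F -> t1 <= x -> x < y -> y <= t2 ->
  derivable F x 1 -> derivable F y 1 -> derive1 F y <= derive1 F x.
Proof.
move=> cF t1x xy yt2 dx dy.
have yx0 : 0 < y - x by rewrite subr_gt0.
set s := (F y - F x) / (y - x).
have key : forall h, 0 < h -> h <= y - x ->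
  s * h <= F (h + x) - F x.
  move=> h h0 hyx.
  pose l := 1 - h / (y - x).
  have l01 : 0 <= l <= 1.
    rewrite /l subr_ge0 ler_pdivrMr // mul1r hyx /= lerBlDr lerDl.
    by rewrite divr_ge0 // ltW.
  have := cF x y l.
  have hx : t1 <= x <= t2 by rewrite t1x /= (le_trans (ltW xy)).
  have hy : t1 <= y <= t2 by rewrite yt2 (le_trans t1x (ltW xy)).
  move=> /(_ hx hy l01).
  have -> : l * x + (1 - l) * y = h + x.
    rewrite /l opprB addrCA subrr addr0 mulrBl mul1r.
    by field; rewrite gt_eqF.
  have -> : 1 - l = h / (y - x) by rewrite /l opprB addrCA subrr addr0.
  rewrite /l /s => H.
  have -> : (F y - F x) / (y - x) * h = h / (y - x) * F y - h / (y - x) * F x.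
    by field; rewrite gt_eqF.
  move: H; set c := h / (y - x); move=> H; lra.
have /dnbhs_right cx := @der_cvg F x dx.
have /dnbhs_left cy := @der_cvg F y dy.
have sx : s <= derive1 F x.
  rewrite -(cvg_lim _ cx) //; apply: limr_ge; first by apply/cvg_ex; eexists; exact: cx.
  near=> h.
  have h0 : 0 < h by near: h; exists 1; [exact: ltr01| by move=> z _ /=].
  have hyx : h <= y - x.
    near: h; exists (y - x) => // z /= ; rewrite sub0r normrN => zl z0.
    by rewrite ltW // (le_lt_trans _ zl) // ler_norm.
  by rewrite ler_pdivlMl // mulrC key.
have key2 : forall h, h < 0 -> - h <= y - x ->
  F (h + y) - F y >= s * h.
  move=> h h0 hyx.
  pose l := - h / (y - x).
  have l01 : 0 <= l <= 1.
    apply/andP; split; [by rewrite divr_ge0 // ?oppr_ge0 ?ltW | by rewrite ler_pdivrMr // mul1r].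
  have := cF x y l.
  have hx : t1 <= x <= t2 by rewrite t1x /= (le_trans (ltW xy)).
  have hy : t1 <= y <= t2 by rewrite yt2 (le_trans t1x (ltW xy)).
  move=> /(_ hx hy l01).
  have -> : l * x + (1 - l) * y = h + y.
    rewrite /l; by field; rewrite gt_eqF.
  rewrite /l /s => H.
  have -> : (F y - F x) / (y - x) * h = (- h / (y - x)) * F x - (- h / (y - x)) * F y.
    by field; rewrite gt_eqF.
  move: H; set c := - h / (y - x); move=> H; lra.
have sy : derive1 F y <= s.
  rewrite -(cvg_lim _ cy) //; apply: limr_le; first by apply/cvg_ex; eexists; exact: cy.
  near=> h.
  have h0 : h < 0 by near: h; exists 1; [exact: ltr01| by move=> z _ /=].
  have hyx : - h <= y - x.
    near: h; exists (y - x) => // z /= ; rewrite sub0r normrN => zl z0.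
    by rewrite ltW // (le_lt_trans _ zl) // -normrN ler_norm.
  have -> : s = h^-1 * (s * h) by field; rewrite lt_eqF.
  by rewrite ler_nM2l ?invr_lt0 //; exact: key2.
exact: le_trans sy sx.
Unshelve. all: by end_near.
Qed.

End S_A2.

Section S_A3.
Context {R : realType}.
Notation mu := (@lebesgue_measure R).


Lemma ac_pair (a b : R) (F : R -> R) e : abs_continuous a b F -> 0 < e ->
  exists2 d : R, 0 < d & forall x y, a <= x <= b -> a <= y <= b ->
    `|x - y| < d -> `|F x - F y| < e.
Proof.
move=> acF e0; have [d d0 hd] := acF e e0; exists d => // x y hx hy xyd.
wlog xy : x y hx hy xyd / x <= y.
  move=> W; have [/W|/ltW yx] := leP x y; first exact.
  by rewrite distrC; apply: W => //; rewrite distrC.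
have := hd 1%N (fun _ => x) (fun _ => y).
rewrite !big_ord1 distrC; apply.
- by move=> _; case/andP: hx => -> _; case/andP: hy => _ ->; rewrite xy.
- by move=> i j; rewrite !ord1.
- by rewrite -normrN opprB ger0_norm ?subr_ge0 // in xyd.
Qed.

Lemma ac_cont (a b : R) (F : R -> R) x : abs_continuous a b F -> a < x < b ->
  {for x, continuous F}.
Proof.
move=> acF /andP[ax xb]; apply/cvgrPdist_lt => e e0.
have [d d0 hd] := @ac_pair a b F e acF e0.
have xin : x \in `]a, b[ by rewrite in_itv /= ax xb.
near=> y.
have : y \in `]a, b[ by near: y; exact: near_in_itvoo.
rewrite in_itv /= => /andP[ay yb].
apply: hd; [by rewrite !ltW | by rewrite !ltW |].
by near: y; apply/nbhs_ballP; exists d => // z; rewrite /ball /=.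
Unshelve. all: by end_near.
Qed.

End S_A3.

Section S_A4.
Context {R : realType}.
Notation mu := (@lebesgue_measure R).


Lemma sq_derivable (F : R -> R) x D : {for x, continuous F} -> F x != 0 ->
  is_derive x 1 (fun y => F y ^+ 2) D -> derivable F x 1.
Proof.
move=> cF Fx0 dF2.
have cF' : F x @[x --> x] --> F x := cF.
have Fx2 : 0 < F x ^+ 2 by rewrite exprn_even_gt0.
have ds : derivable (Num.sqrt \o (fun y => F y ^+ 2)) x 1.
  have := @is_derive1_comp R Num.sqrt (fun y => F y ^+ 2) x _ D (is_derive1_sqrt Fx2) dF2.
  by case.
have [Fp|Fn] := ltP 0 (F x).
  have H : \forall y \near x, (Num.sqrt \o (fun y => F y ^+ 2)) y = F y.
    have H0 : \forall t \near x, 0 < F t by exact: (cvgr_gt (F x) cF' 0 Fp).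
    near=> y; have Fy : 0 < F y by near: y.
    by rewrite /= sqrtr_sqr gtr0_norm.
  exact: (@near_eq_derivable R R R _ F x 1 H ds).
have Fn' : F x < 0 by rewrite lt_neqAle Fx0 Fn.
have dsN : derivable (fun y => - (Num.sqrt \o (fun y => F y ^+ 2)) y) x 1.
  exact: derivableN.
have H : \forall y \near x, (fun y => - (Num.sqrt \o (fun y => F y ^+ 2)) y) y = F y.
  have H0 : \forall t \near x, F t < 0 by exact: (cvgr_lt (F x) cF' 0 Fn').
  near=> y; have Fy : F y < 0 by near: y.
  by rewrite /= sqrtr_sqr ltr0_norm // opprK.
exact: (@near_eq_derivable R R R _ F x 1 H dsN).
Unshelve. all: by end_near. Qed.

End S_A4.

Section S_A5.
Context {R : realType}.
Notation mu := (@lebesgue_measure R).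



Lemma neg1 (p : R) : mu.-negligible [set p].
Proof. by exists [set p]; split => //; rewrite lebesgue_measure_set1. Qed.

Lemma concave_chord (t1 t2 : R) F p z r : concave_on t1 t2 F ->
  t1 <= p -> p < r -> r <= t2 -> p <= z <= r ->
  (r - z) / (r - p) * F p + (z - p) / (r - p) * F r <= F z.
Proof.
move=> cF t1p pr rt2 /andP[pz zr].
have rp : 0 < r - p by rewrite subr_gt0.
have l01 : 0 <= (r - z) / (r - p) <= 1.
  apply/andP; split; first by apply: divr_ge0; rewrite subr_ge0 // ltW.
  by rewrite ler_pdivrMr // mul1r lerB.
have := cF p r _ _ _ l01.
have hp : t1 <= p <= t2 by rewrite t1p /= (le_trans (ltW pr)).
have hr : t1 <= r <= t2 by rewrite rt2 (le_trans t1p (ltW pr)).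
move=> /(_ hp hr).
have -> : (r - z) / (r - p) * p + (1 - (r - z) / (r - p)) * r = z.
  by field; rewrite gt_eqF.
have -> : 1 - (r - z) / (r - p) = (z - p) / (r - p).
  by field; rewrite gt_eqF.
done.
Qed.

Lemma concave_zero_mid (t1 t2 : R) F p q r : concave_on t1 t2 F ->
  t1 <= p -> p < q -> q < r -> r <= t2 -> F p = 0 -> F q = 0 -> F r = 0 ->
  forall z, p <= z <= r -> F z = 0.
Proof.
move=> cF t1p pq qr rt2 Fp Fq Fr z /andP[pz zr].
have pr : p < r by apply: lt_trans qr.
have ge0 : 0 <= F z.
  have := @concave_chord t1 t2 F p z r cF t1p pr rt2; rewrite pz zr Fp Fr !mulr0 addr0.
  by apply.
apply/eqP; rewrite eq_le ge0 andbT.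
have [zq|qz] := ltP z q.
  have := @concave_chord t1 t2 F z q r cF (le_trans t1p pz) (lt_trans zq qr) rt2.
  rewrite (ltW zq) (ltW qr) Fr Fq mulr0 addr0 => /(_ isT).
  have c0 : 0 < (r - q) / (r - z) by rewrite divr_gt0 // subr_gt0 // (lt_trans zq).
  by rewrite pmulr_rle0.
have [->|qz'] := eqVneq z q; first by rewrite Fq.
have qz2 : q < z by rewrite lt_neqAle eq_sym qz' qz.
have := @concave_chord t1 t2 F p q z cF t1p (lt_trans pq qz2) (le_trans zr rt2).
rewrite (ltW pq) (ltW qz2) Fp Fq mulr0 add0r => /(_ isT).
have c0 : 0 < (q - p) / (z - p) by rewrite divr_gt0 // subr_gt0 // (lt_trans pq).
by rewrite pmulr_rle0.
Qed.

Lemma zero_negl (t1 t2 : R) F : concave_on t1 t2 F ->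
  mu.-negligible [set x | t1 < x < t2 /\ F x = 0 /\ ~ derivable F x 1].
Proof.
move=> cF.
set Z := [set x | _].
have nomid : forall a m c, Z a -> Z m -> Z c -> a < m -> m < c -> False.
  move=> a m c [/andP[t1a _] [Fa _]] [_ [Fm ndm]] [/andP[_ ct2] [Fc _]] am mc.
  apply: ndm.
  have F0 := @concave_zero_mid t1 t2 F a m c cF (ltW t1a) am mc (ltW ct2) Fa Fm Fc.
  have min : m \in `]a, c[ by rewrite in_itv /= am mc.
  have H : \forall y \near m, cst (0:R) y = F y.
    near=> y.
    have : y \in `]a, c[ by near: y; exact: near_in_itvoo.
    by rewrite in_itv /= => /andP[ay yc]; rewrite F0 // !ltW.
  exact: (@near_eq_derivable R R R _ F m 1 H (derivable_cst _ _ _)).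
have three : forall a b c, Z a -> Z b -> Z c -> a != b -> b != c -> a != c -> False.
  move=> a b c Za Zb Zc ab bc ac.
  case: (ltgtP a b) ab => ab // _; case: (ltgtP b c) bc => bc // _;
    case: (ltgtP a c) ac => ac // _.
  all: try by apply: (nomid a b c).
  all: try by apply: (nomid a c b).
  all: try by apply: (nomid b a c).
  all: try by apply: (nomid b c a).
  all: try by apply: (nomid c a b).
  all: try by apply: (nomid c b a).
case: (pselect (exists p, Z p)) => [[p Zp]|nZ]; last first.
  apply: (negligibleS _ (negligible_set0 mu)) => z Zz; apply: nZ; by exists z.
case: (pselect (exists q, Z q /\ q != p)) => [[q [Zq qp]]|nq].
  apply: (negligibleS _ (negligibleU (neg1 p) (neg1 q))) => z Zz.
  have [->|zp] := eqVneq z p; first by left.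
  have [->|zq] := eqVneq z q; first by right.
  by exfalso; apply: (three p q z) => //; rewrite eq_sym.
apply: (negligibleS _ (neg1 p)) => z Zz /=.
apply: contrapT => zp; apply: nq; exists z; split => //; exact/eqP.
Unshelve. all: by end_near.
Qed.

End S_A5.

Section S_A6.
Context {R : realType}.
Notation mu := (@lebesgue_measure R).



Lemma ae_good (t1 x1 t2 x2 b : R) F rho s1 s2 :
  0 < t1 -> feasible t1 x1 t2 x2 b F rho -> concave_on t1 t2 F ->
  t1 <= s1 -> s1 < s2 -> s2 <= t2 ->
  (forall t, s1 <= t <= s2 -> gfun t1 F rho b t = 0) ->
  {ae mu, forall x, s1 < x < s2 -> derivable F x 1 /\
     rho x = (derive1 F x - F x / x) ^+ 2}.
Proof.
move=> t10 [acF [Ft1 [Ft2 [mrho [rho0 [irho [iF2 g0]]]]]]] cF t1s1 s12 s2t2 gz.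
set f0 := fun s => rho s - derive1 F s ^+ 2.
have if0 : mu.-integrable `[t1, t2] (EFin \o f0).
  have := integrableB _ irho iF2; rewrite /f0.
  have -> : (fun x => ((rho x)%:E - (derive1 F x ^+ 2)%:E)%E) = EFin \o f0 by apply/funext => x /=.
  by apply.
set fp := f0 \_ `[t1, t2].
have mI : measurable (`[t1, t2] : set R) by [].
have lp := lebesgue_differentiation (integrable_locally_restrict mI if0).
have ng := zero_negl t1 t2 F cF.
have ifp : mu.-integrable [set` Interval (BLeft t1) (BRight t2)] (EFin \o fp).
  have := @eq_integrable _ _ _ mu _ mI (EFin \o f0) (EFin \o fp).
  apply => // x /[!inE] xin /=.
  by rewrite /fp patchE mem_set.
have nZ : {ae mu, forall x, ~ (t1 < x < t2 /\ F x = 0 /\ ~ derivable F x 1)}.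
  by apply: (negligibleS _ ng) => x /= /contrapT.
apply: (@filterS2 _ _ (ae_filter_ringOfSetsType mu) _ _ _ _ lp nZ) => x lpx nZx /andP[s1x xs2].
have t1x : t1 < x by apply: le_lt_trans s1x.
have xt2 : x < t2 by apply: lt_le_trans s2t2.
have x0 : 0 < x by apply: lt_trans t1x.
have bx : (BLeft t1 < BRight x)%E.
  by rewrite /= lte_fin.
have [dI dIv] := @FTC1_lebesgue_pt R fp (BLeft t1) x t2 xt2 ifp bx lpx.
set I := fun y => \int[mu]_(t in [set` Interval (BLeft t1) (BRight y)]) fp t.
set c := b - F t1 ^+ 2 / t1.
have eqI : forall y, s1 <= y <= s2 -> F y ^+ 2 = - (c + I y) * y.
  move=> y /andP[s1y ys2]; have y0 : 0 < y by apply: lt_le_trans t10 (le_trans t1s1 s1y).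
  have := gz y; rewrite s1y ys2 => /(_ isT).
  rewrite /gfun -/c.
  have -> : \int[mu]_(s in `[t1, y]) (rho s - derive1 F s ^+ 2) = I y.
    apply: eq_Rintegral => z; rewrite inE /= in_itv /= => /andP[t1z zy].
    by rewrite /fp patchE mem_set //= in_itv /= t1z (le_trans zy (le_trans ys2 s2t2)).
  move=> H; have : F y ^+ 2 / y = - (c + I y) by rewrite -[RHS]addr0 -H; ring.
  by move=> <-; field; rewrite gt_eqF.
have dI' : is_derive x 1 I (fp x) by rewrite -dIv derive1E; exact: derivableP.
have dG : is_derive x 1 (fun y => - (c + I y) * y) (- (c + I x) * 1 + x * (- fp x)).
  have h0 : is_derive x 1 (fun y => c + I y) (0 + fp x).
    exact: (@is_deriveD _ _ _ (cst c) I x 1 0 (fp x) _ dI').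
  have h1 : is_derive x 1 (fun y => - (c + I y)) (- (0 + fp x)).
    exact: (@is_deriveN _ _ _ (fun y => c + I y) x 1 _ h0).
  have h2 := @is_deriveM _ _ (fun y => - (c + I y)) id x 1 _ _ h1 (is_derive_id x 1).
  by rewrite add0r in h2; exact: h2.
have xin : x \in `]s1, s2[ by rewrite in_itv /= s1x xs2.
have nearEq : \forall y \near x, (fun y => - (c + I y) * y) y = (fun y => F y ^+ 2) y.
  near=> y.
  have : y \in `]s1, s2[ by near: y; exact: near_in_itvoo.
  by rewrite in_itv /= => /andP[s1y ys2]; rewrite eqI // !ltW.
have dF2 := near_eq_is_derive nearEq dG.
have dF : derivable F x 1.
  case: (eqVneq (F x) 0) => [Fx0|Fx0].
    apply: contrapT => nd; apply: nZx; split; [by rewrite t1x xt2| by split].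
  have cFx : {for x, continuous F}.
    by apply: (@ac_cont _ t1 t2 F x acF); rewrite t1x xt2.
  exact: (@sq_derivable _ F x _ cFx Fx0 dF2).
split => //.
have dX := @is_deriveX _ _ F 2 x 1 _ (derivableP dF).
have e1 := @derive_val _ _ _ _ _ _ _ dX.
have e2 := @derive_val _ _ _ _ _ _ _ dF2.
have eF : (F ^+ 2) = (fun y => F y ^+ 2) by apply/funext => y; rewrite exprfctE.
rewrite eF e2 in e1.
have fpx : fp x = rho x - derive1 F x ^+ 2.
  by rewrite /fp patchE mem_set //= in_itv /= !ltW.
have cx : c + I x = - (F x ^+ 2 / x).
  by rewrite eqI ?ltW ?s1x ?xs2 //; field; rewrite gt_eqF.
rewrite fpx cx -derive1E in e1.
apply: (mulfI (lt0r_neq0 x0)).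
move: e1; rewrite /= => e1.
set d := derive1 F x in e1 *; set r := rho x in e1 *; set f := F x in e1 *.
have E : x * r = f ^+ 2 / x + x * d ^+ 2 - 2 * f * d.
  have e1' : f ^+ 2 / x * 1 + x * - (r - d ^+ 2) = 2 * f * d.
    by move: e1; rewrite opprK expr1 => ->.
  apply/eqP; rewrite -subr_eq0; apply/eqP; rewrite -[RHS](subrr (2 * f * d)).
  rewrite -{1}e1'; ring.
by rewrite E; field; rewrite gt_eqF.
Unshelve. all: by end_near.
Qed.

End S_A6.

Section S_A7.
Context {R : realType}.
Notation mu := (@lebesgue_measure R).



Lemma ae_dense (P : R -> Prop) a c : {ae mu, forall x, P x} -> a < c ->
  exists x, a < x < c /\ P x.
Proof.
move=> [N [mN N0 sN]] ac.
apply: contrapT => nex.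
have sub : `]a, c[ `<=` N.
  move=> x xin; apply: sN => Px; apply: nex; exists x; split => //.
have := @le_measure _ _ _ mu `]a, c[%classic N.
rewrite !inE => /(_ (measurable_itv _) mN sub).
move=> H; have H2 : (mu `]a, c[ <= 0)%E by rewrite -N0.
move: H2; rewrite lebesgue_measure_itv /= lte_fin ac.
by rewrite -EFinD lee_fin subr_le0 leNgt ac.
Qed.

Lemma phi_near (a b : R) F x e : 0 < a -> abs_continuous a b F -> a <= x <= b ->
  0 < e -> exists2 d : R, 0 < d & forall y, a <= y <= b -> `|x - y| < d ->
  `|F x / x - F y / y| < e.
Proof.
move=> a0 acF xab e0.
have e1 : 0 < e * a / 2 by rewrite divr_gt0 // mulr_gt0.
have [d1 d10 hd1] := @ac_pair _ a b F _ acF e1.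
set M := `|F x| + 1.
have M0 : 0 < M by rewrite ltr_wpDl.
have e2 : 0 < e * a * a / 2 / M by rewrite !divr_gt0 // !mulr_gt0.
exists (Num.min d1 (e * a * a / 2 / M)); first by rewrite lt_min d10 e2.
move=> y yab; rewrite lt_min => /andP[xy1 xy2].
have x0 : 0 < x by case/andP: xab => ax _; apply: lt_le_trans ax.
have y0 : 0 < y by case/andP: yab => ay _; apply: lt_le_trans ay.
have ax : a <= x by case/andP: xab.
have ay : a <= y by case/andP: yab.
have -> : F x / x - F y / y = (F x - F y) / y + F x * (y - x) / (x * y).
  by field; rewrite !gt_eqF.
apply: (le_lt_trans (ler_normD _ _)).
have h1 : `|(F x - F y) / y| < e / 2.
  rewrite normrM normfV (gtr0_norm y0).
  have i1 : `|F x - F y| * y^-1 <= `|F x - F y| * a^-1.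
    by rewrite ler_wpM2l // lef_pV2 // posrE.
  apply: (le_lt_trans i1).
  have i2 : `|F x - F y| * a^-1 < e * a / 2 * a^-1.
    by rewrite ltr_pM2r ?invr_gt0 //; apply: hd1.
  apply: (lt_le_trans i2); rewrite le_eqVlt; apply/orP; left; apply/eqP; field; by rewrite gt_eqF.
have h2 : `|F x * (y - x) / (x * y)| <= e / 2.
  rewrite normrM normfV normrM (gtr0_norm (mulr_gt0 x0 y0)).
  have j1 : `|F x| * `|y - x| <= M * (e * a * a / 2 / M).
    rewrite distrC in xy2.
    apply: ler_pM => //; first by rewrite lerDl.
    exact: ltW.
  have j2 : (x * y)^-1 <= (a * a)^-1.
    by rewrite lef_pV2 ?posrE ?mulr_gt0 // ler_pM // ltW.
  apply: (le_trans (ler_pM _ _ j1 j2)) => //; first by rewrite invr_ge0 ltW // mulr_gt0.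
  rewrite le_eqVlt; apply/orP; left; apply/eqP; field; do ?[apply/andP; split]; by rewrite gt_eqF.
have -> : e = e / 2 + e / 2 by rewrite -splitr.
exact: ltr_leD.
Qed.

Definition cont_on (s1 s2 : R) (phi : R -> R) := forall x, s1 <= x <= s2 ->
  forall e : R, 0 < e -> exists2 d : R, 0 < d & forall y, s1 <= y <= s2 ->
  `|x - y| < d -> `|phi x - phi y| < e.

Lemma mono_ext (s1 s2 : R) (phi : R -> R) : cont_on s1 s2 phi ->
  (forall x y, s1 < x -> x <= y -> y < s2 -> phi y <= phi x) ->
  forall x y, s1 <= x -> x <= y -> y <= s2 -> phi y <= phi x.
Proof.
move=> cph mon x y s1x xy ys2.
have [->|xy'] := eqVneq x y; first by [].
have xy2 : x < y by rewrite lt_neqAle xy' xy.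
apply/ler_addgt0Pr => e e0.
have e2 : 0 < e / 2 by rewrite divr_gt0.
have [dx dx0 hx] := cph x ltac:(apply/andP; split; lra) _ e2.
have [dy dy0 hy] := cph y ltac:(apply/andP; split; lra) _ e2.
set m0 := Num.min (Num.min dx dy) (y - x).
have m00 : 0 < m0 by rewrite !lt_min dx0 dy0 subr_gt0 xy2.
have m1 : m0 <= dx by rewrite !ge_min lexx.
have m2 : m0 <= dy by rewrite !ge_min lexx orbT.
have m3 : m0 <= y - x by rewrite !ge_min lexx !orbT.
set m := m0 / 3.
have mm : m0 = 3 * m by rewrite /m; field.
rewrite mm in m00 m1 m2 m3.
have hx' := hx (x + m).
have hy' := hy (y - m).
have : phi (y - m) <= phi (x + m) by apply: mon; lra.
have : `|x - (x + m)| < dx by rewrite opprD addrA subrr sub0r normrN gtr0_norm; lra.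
move=> /hx' => /(_ ltac:(apply/andP; split; lra)).
have : `|y - (y - m)| < dy by rewrite opprB addrC subrK gtr0_norm; lra.
move=> /hy' => /(_ ltac:(apply/andP; split; lra)).
rewrite !ltr_norml => /andP[a1 a2] /andP[b1 b2] c.
lra.
Qed.

Lemma KI_ext (s1 s2 : R) (phi B : R -> R) (D : R -> Prop) :
  (forall a c, s1 <= a -> a < c -> c <= s2 -> exists x, a < x < c /\ D x) ->
  cont_on s1 s2 phi ->
  (forall x y, s1 <= x -> x <= y -> y <= s2 -> B y <= B x) ->
  (forall x y, D x -> D y -> x < y -> phi y - phi x <= B y - B x) ->
  forall x y, s1 < x -> x <= y -> y < s2 -> phi y - phi x <= B y - B x.
Proof.
move=> dens cph monB key x y s1x xy ys2.
have [->|xy'] := eqVneq x y; first by rewrite !subrr.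
have xy2 : x < y by rewrite lt_neqAle xy' xy.
apply/ler_addgt0Pr => e e0.
have e2 : 0 < e / 2 by rewrite divr_gt0.
have [dx dx0 hx] := cph x ltac:(apply/andP; split; lra) _ e2.
have [dy dy0 hy] := cph y ltac:(apply/andP; split; lra) _ e2.
have [x' [/andP[x'1 x'2] Dx']] : exists x', Num.max s1 (x - dx) < x' < x /\ D x'.
  apply: dens; first by rewrite le_max lexx.
  - by rewrite gt_max s1x /= ltrBlDr ltrDl.
  - lra.
have [y' [/andP[y'1 y'2] Dy']] : exists y', y < y' < Num.min s2 (y + dy) /\ D y'.
  apply: dens; [lra | by rewrite lt_min ys2 /= ltrDl | by rewrite ge_min lexx].
move: x'1 y'2; rewrite gt_max lt_min => /andP[x'1 x'3] /andP[y'3 y'4].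
have k := key x' y' Dx' Dy' ltac:(lra).
have b1 : B y' <= B y by apply: monB; lra.
have b2 : B x <= B x' by apply: monB; lra.
have : `|x - x'| < dx by rewrite gtr0_norm; lra.
move=> /(hx x' ltac:(apply/andP; split; lra)).
have : `|y - y'| < dy by rewrite ltr0_norm; lra.
move=> /(hy y' ltac:(apply/andP; split; lra)).
rewrite !ltr_norml => /andP[a1 a2] /andP[c1 c2].
lra.
Qed.

End S_A7.

Section S_A8.
Context {R : realType}.
Notation mu := (@lebesgue_measure R).



Lemma ac_sub (t1 t2 s1 s2 : R) F : abs_continuous t1 t2 F -> t1 <= s1 -> s2 <= t2 ->
  abs_continuous s1 s2 F.
Proof.
move=> acF t1s1 s2t2 e e0; have [d d0 hd] := acF e e0; exists d => // n u v huv.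
apply: hd => i; have [h1 [h2 h3]] := huv i; split; [exact: le_trans h1|split=> //].
exact: le_trans s2t2.
Qed.

Lemma quot_bound (a M : R) F u v : 0 < a -> a <= u -> u <= v -> `|F u| <= M ->
  `|F v / v - F u / u| <= a^-1 * `|F v - F u| + (M / (a * a)) * (v - u).
Proof.
move=> a0 au uv FuM.
have u0 : 0 < u by apply: lt_le_trans au.
have v0 : 0 < v by apply: lt_le_trans uv.
have -> : F v / v - F u / u = (F v - F u) / v + F u * (u - v) / (u * v).
  by field; rewrite !gt_eqF.
apply: (le_trans (ler_normD _ _)); apply: lerD.
  rewrite normrM normfV (gtr0_norm v0) mulrC ler_wpM2r //.
  by rewrite lef_pV2 ?posrE // (le_trans au).
have e1 : `|F u * (u - v) / (u * v)| = `|F u| * (v - u) * (u * v)^-1.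
  rewrite normrM normfV normrM (gtr0_norm (mulr_gt0 u0 v0)) distrC.
  by rewrite (ger0_norm (x:=v - u)) // subr_ge0.
rewrite e1.
have e2 : M / (a * a) * (v - u) = M * (v - u) * (a * a)^-1.
  by rewrite mulrAC.
rewrite e2.
apply: ler_pM.
- by rewrite mulr_ge0 // subr_ge0.
- by rewrite invr_ge0 ltW // mulr_gt0.
- by rewrite ler_wpM2r // subr_ge0.
- have av : a <= v by apply: le_trans uv.
  rewrite lef_pV2 ?posrE ?mulr_gt0 //.
  exact: ler_pM (ltW a0) (ltW a0) au av.

Qed.

End S_A8.

Theorem lemma12 (R : realType) (t1 x1 t2 x2 b : R) (F rho : R -> R)
    (s1 s2 : R) :
  0 < t1 -> t1 < t2 -> x2 / t2 < x1 / t1 ->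
  0 <= b ->
  b <= (x2 - x1) ^+ 2 / (t2 - t1) + x1 ^+ 2 / t1 - x2 ^+ 2 / t2 ->
  feasible t1 x1 t2 x2 b F rho ->
  (forall G sigma, feasible t1 x1 t2 x2 b G sigma ->
     (I2 t1 t2 rho <= I2 t1 t2 sigma)%E) ->
  concave_on t1 t2 F ->
  (forall t, t1 < t < t2 -> derivable F t 1 -> derive1 F t <= F t / t) ->
  (forall x y, t1 <= x -> x <= y -> y <= t2 -> rho y <= rho x) ->
  t1 <= s1 -> s1 < s2 -> s2 <= t2 ->
  (forall t, s1 <= t <= s2 -> gfun t1 F rho b t = 0) ->
  (exists2 h : R -> R, abs_continuous s1 s2 h &
     {ae (@lebesgue_measure R), forall t, s1 <= t <= s2 -> h t = derive1 F t}) /\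
  (exists2 r : R -> R, abs_continuous s1 s2 r &
     {ae (@lebesgue_measure R), forall t, s1 <= t <= s2 -> r t = rho t}).
Proof.
move=> t10 t12 _ _ _ feas _ cF dle rhomono t1s1 s12 s2t2 gz.
have feas' := feas; case: feas => [acF [Ft1 [Ft2 [mrho [rho0 [irho [iF2 g0]]]]]]].
have good := @ae_good R t1 x1 t2 x2 b F rho s1 s2 t10 feas' cF t1s1 s12 s2t2 gz.
have s10 : 0 < s1 by apply: lt_le_trans t1s1.
set phi := fun t => F t / t.
set B := fun t => Num.sqrt (rho t).
set D := fun x => s1 < x < s2 /\ derivable F x 1 /\
                  rho x = (derive1 F x - F x / x) ^+ 2.
have dens : forall a c, s1 <= a -> a < c -> c <= s2 -> exists x, a < x < c /\ D x.
  move=> a c s1a ac cs2; have [x [/andP[ax xc] Px]] := @ae_dense R _ a c good ac.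
  exists x; split; first by rewrite ax xc.
  have hx : s1 < x < s2 by rewrite (le_lt_trans s1a ax) (lt_le_trans xc cs2).
  by split => //; apply: Px.
have cph : cont_on s1 s2 phi.
  move=> x /andP[s1x xs2] e e0.
  have [d d0 hd] := @phi_near R t1 t2 F x e t10 acF
     ltac:(apply/andP; split; [exact: le_trans s1x|exact: le_trans s2t2]) e0.
  exists d => // y /andP[s1y ys2]; apply: hd.
  by apply/andP; split; [exact: le_trans s1y|exact: le_trans s2t2].
have monB : forall x y, s1 <= x -> x <= y -> y <= s2 -> B y <= B x.
  move=> x y s1x xy ys2; rewrite /B ler_sqrt; last first.
    by apply: rho0; apply/andP; split; [exact: (le_trans t1s1 s1x)|
       exact: le_trans (le_trans xy ys2) s2t2].
  by apply: rhomono => //; [exact: (le_trans t1s1 s1x)| exact: le_trans s2t2].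
have DF : forall x, D x -> derive1 F x = phi x - B x.
  move=> x [/andP[s1x xs2] [dx rx]].
  have t1x : t1 < x by apply: le_lt_trans s1x.
  have xt2 : x < t2 by apply: lt_le_trans s2t2.
  have := dle x ltac:(by rewrite t1x xt2) dx.
  rewrite /B rx sqrtr_sqr /phi => le1.
  by rewrite ler0_norm ?subr_le0 // opprB; ring.
have key : forall x y, D x -> D y -> x < y -> phi y - phi x <= B y - B x.
  move=> x y Dx Dy xy.
  have [/andP[s1x _] [dx _]] := Dx.
  have [/andP[_ ys2] [dy _]] := Dy.
  have := @concave_der_mono R t1 t2 F x y cF (le_trans t1s1 (ltW s1x)) xy
    (le_trans (ltW ys2) s2t2) dx dy.
  rewrite (DF x Dx) (DF y Dy) => h; lra.
have KI := @KI_ext R s1 s2 phi B D dens cph monB key.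
have phimono : forall x y, s1 <= x -> x <= y -> y <= s2 -> phi y <= phi x.
  apply: (@mono_ext R s1 s2 phi cph) => x y s1x xy ys2.
  have := KI x y s1x xy ys2.
  have := monB x y (ltW s1x) xy (ltW ys2).
  lra.
set m := (s1 + s2) / 2.
have s1m : s1 < m by rewrite /m; lra.
have ms2 : m < s2 by rewrite /m; lra.
set E1 := [set v | exists z, s1 < z < s2 /\ v = B z].
set E2 := [set v | exists z, s1 < z < s2 /\ v = - B z].
have E1n : E1 !=set0 by exists (B m); exists m; rewrite s1m ms2.
have E2n : E2 !=set0 by exists (- B m); exists m; rewrite s1m ms2.
have hs1 : has_sup E1.
  split => //; exists (B s1) => v [z [/andP[s1z zs2] ->]].
  exact: monB s1 z (lexx _) (ltW s1z) (ltW zs2).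
have hs2 : has_sup E2.
  split => //; exists (- B s2) => v [z [/andP[s1z zs2] ->]].
  by rewrite lerN2; exact: monB z s2 (ltW s1z) (ltW zs2) (lexx _).
set S1 := sup E1.
set S2 := - sup E2.
have S1ge : forall z, s1 < z < s2 -> B z <= S1.
  by move=> z hz; apply: sup_upper_bound => //; exists z.
have S2le : forall z, s1 < z < s2 -> S2 <= B z.
  move=> z hz; rewrite /S2 lerNl; apply: sup_upper_bound => //; exists z.
  by split.
have S1le : forall y, s1 < y < s2 -> S1 <= B y - phi y + phi s1.
  move=> y /andP[s1y ys2]; apply: ge_sup => // v [z [/andP[s1z zs2] ->]].
  have [zy|yz] := leP z y.
    have := KI z y s1z zy ys2; have := phimono s1 z (lexx _) (ltW s1z) (ltW zs2).
    lra.
  have := monB y z (ltW s1y) (ltW yz) (ltW zs2).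
  have := phimono s1 y (lexx _) (ltW s1y) (ltW ys2).
  lra.
have S2ge : forall x, s1 < x < s2 -> B x + phi s2 - phi x <= S2.
  move=> x /andP[s1x xs2]; rewrite /S2 lerNr.
  apply: ge_sup => // v [z [/andP[s1z zs2] ->]].
  have [xz|zx] := leP x z.
    have := KI x z s1x xz zs2; have := phimono z s2 (ltW s1z) (ltW zs2) (lexx _).
    lra.
  have := monB z x (ltW s1z) (ltW zx) (ltW xs2).
  have := phimono x s2 (ltW s1x) (ltW xs2) (lexx _).
  lra.
pose r t := if t <= s1 then S1 else if t < s2 then B t else S2.
have rs1 : r s1 = S1 by rewrite /r lexx.
have rs2 : r s2 = S2 by rewrite /r leNgt s12 /= ltxx.
have rint : forall t, s1 < t < s2 -> r t = B t.
  by move=> t /andP[s1t ts2]; rewrite /r leNgt s1t /= ts2.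
have P : forall x y, s1 <= x -> x <= y -> y <= s2 ->
    phi y - phi x <= r y - r x /\ r y - r x <= 0.
  move=> x y s1x xy ys2.
  have [<-|xy'] := eqVneq x y; first by rewrite !subrr.
  have xy2 : x < y by rewrite lt_neqAle xy' xy.
  have [x1'|s1x'] := eqVneq x s1; have [y2'|ys2'] := eqVneq y s2.
  all: try have ys2s : y < s2 by move: ys2; rewrite le_eqVlt (negPf ys2').
  all: try have s1xs : s1 < x by move: s1x; rewrite le_eqVlt eq_sym (negPf s1x').
  - rewrite x1' y2' rs1 rs2.
    have := S1le m ltac:(by rewrite s1m ms2); have := S1ge m ltac:(by rewrite s1m ms2).
    have := S2le m ltac:(by rewrite s1m ms2); have := S2ge m ltac:(by rewrite s1m ms2).
    lra.
  - have hy : s1 < y < s2 by rewrite -x1' xy2 ys2s.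
    rewrite x1' rs1 rint //.
    have := S1le y hy; have := S1ge y hy; lra.
  - have hx : s1 < x < s2 by rewrite -y2' xy2 s1xs.
    rewrite y2' rs2 rint //.
    have := S2le x hx; have := S2ge x hx; lra.
  - have hx : s1 < x < s2.
      by rewrite s1xs (lt_le_trans xy2 ys2).
    have hy : s1 < y < s2.
      by rewrite ys2s (le_lt_trans s1x xy2).
    rewrite !rint //.
    have := KI x y (proj1 (andP hx)) xy (proj2 (andP hy)).
    have := monB x y s1x xy ys2; lra.
have rb : forall t, s1 <= t <= s2 -> S2 <= r t <= S1.
  move=> t /andP[s1t ts2].
  have [_ h1] := P s1 t (lexx _) s1t ts2.
  have [_ h2] := P t s2 s1t ts2 (lexx _).
  rewrite rs1 in h1; rewrite rs2 in h2.
  apply/andP; split; lra.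
have pb : forall t, s1 <= t <= s2 -> `|phi t| <= `|phi s1| + `|phi s2|.
  move=> t /andP[s1t ts2].
  have := phimono s1 t (lexx _) s1t ts2; have := phimono t s2 s1t ts2 (lexx _).
  move=> h1 h2; rewrite ler_norml; apply/andP; split.
    have ha := ler_norm (- phi s2); rewrite normrN in ha.
    have := normr_ge0 (phi s1); lra.
  have := ler_norm (phi s1); have := normr_ge0 (phi s2); lra.
set Mp := `|phi s1| + `|phi s2|.
have Fb : forall t, s1 <= t <= s2 -> `|F t| <= s2 * Mp.
  move=> t ht; have t0 : 0 < t by case/andP: ht => h _; exact: lt_le_trans h.
  have -> : F t = phi t * t by rewrite /phi divfK // gt_eqF.
  rewrite normrM (gtr0_norm t0) mulrC; apply: ler_pM => //; first exact: ltW.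
    by case/andP: ht.
  exact: pb.
have acF' := @ac_sub R t1 t2 s1 s2 F acF t1s1 s2t2.
have acphi : abs_continuous s1 s2 phi.
  apply: (@ac_dom R s1 s2 (s1^-1) (s2 * Mp / (s1 * s1)) F phi _ _ acF').
  - by rewrite invr_ge0 ltW.
  - apply: divr_ge0; last by rewrite mulr_ge0 // ltW.
    by rewrite mulr_ge0 // ?addr_ge0 // ltW // (lt_trans s10 s12).
  - move=> u v s1u uv vs2.
    apply: (@quot_bound R s1 (s2 * Mp) F u v s10 s1u uv).
    by apply: Fb; rewrite s1u (le_trans uv vs2).
have ne1 : {ae (@lebesgue_measure R), forall t, t != s1}.
  apply: (negligibleS _ (neg1 s1)) => t /= /negP; rewrite negbK => /eqP.
  by [].
have ne2 : {ae (@lebesgue_measure R), forall t, t != s2}.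
  apply: (negligibleS _ (neg1 s2)) => t /= /negP; rewrite negbK => /eqP.
  by [].
have gd : {ae (@lebesgue_measure R), forall t, s1 <= t <= s2 -> D t /\ r t = B t}.
  apply: (negligibleS _ (negligibleU (negligibleU good ne1) ne2)) => t /= nP.
  apply: contrapT => H; apply: nP => /andP[s1t ts2].
  have a : s1 < t < s2 -> derivable F t 1 /\ rho t = (derive1 F t - F t / t) ^+ 2.
    by apply: contrapT => h; apply: H; left; left.
  have b1 : t != s1 by apply: contrapT => h; apply: H; left; right.
  have c : t != s2 by apply: contrapT => h; apply: H; right.
  have ht : s1 < t < s2.
    by rewrite !lt_neqAle s1t ts2 !andbT eq_sym b1 c.
  split; last exact: rint.
  by split => //; apply: a.
split.
  exists (fun t => phi t - r t).
    apply: (@ac_dom R s1 s2 2 0 phi _ _ (lexx _) acphi) => //.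
    move=> u v s1u uv vs2; rewrite mul0r addr0.
    have [h1 h2] := P u v s1u uv vs2.
    rewrite (ler0_norm (x := phi v - phi u)); last by lra.
    rewrite ler_norml; apply/andP; split; lra.
  apply: (negligibleS _ gd) => t /= nQ hyp; apply: nQ => ht.
  have [Dt rt] := hyp ht.
  by rewrite (DF t Dt) rt.
exists (fun t => r t ^+ 2).
  set K := `|S1| + `|S2|.
  have K0 : 0 <= K by rewrite addr_ge0.
  apply: (@ac_dom R s1 s2 (2 * K) 0 phi _ _ (lexx _) acphi).
    by rewrite mulr_ge0.
  move=> u v s1u uv vs2; rewrite mul0r addr0.
  have [h1 h2] := P u v s1u uv vs2.
  have rbu := rb u ltac:(by rewrite s1u (le_trans uv vs2)).
  have rbv := rb v ltac:(by rewrite vs2 (le_trans s1u uv)).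
  have nr : forall t, S2 <= r t <= S1 -> `|r t| <= K.
    move=> t /andP[a1 a2]; rewrite /K ler_norml; apply/andP; split.
      have := ler_norm (- S2); rewrite normrN; have := normr_ge0 S1; lra.
    have := ler_norm S1; have := normr_ge0 S2; lra.
  rewrite subr_sqr normrM mulrC.
  apply: ler_pM => //.
  - have := ler_normD (r v) (r u); move/le_trans; apply.
    have := nr v rbv; have := nr u rbu; lra.
  - rewrite (ler0_norm (x := r v - r u)) // (ler0_norm (x := phi v - phi u)); lra.
apply: (negligibleS _ gd) => t /= nQ hyp; apply: nQ => ht.
have [Dt rt] := hyp ht.
rewrite rt /B sqr_sqrtr //.
case: Dt => /andP[s1t ts2] _; apply: rho0.
by rewrite (le_trans t1s1 (ltW s1t)) (le_trans (ltW ts2) s2t2).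
Qed.
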